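(* Let $\Gamma=(G,\sigma)$, $G=(V,E)$, be a balanced signed graph, let $f:V\to\mathbb R$ be not identically zero, and let $\tau:V\to\{+1,-1\}$ be such that $\tau(x)\sigma_{xy}\tau(y)=+1$ for every edge $\{x,y\}\in E$. Then an induced subgraph of $G$ is a strong (respectively weak) nodal domain of $f$ on $\Gamma$ if and only if it is a strong (respectively weak) nodal domain, in the unsigned sense, of the function $\tau f$ ($(\tau f)(x)=\tau(x)f(x)$) on the graph $G$.
   Context: All graphs are finite, simple and undirected. A signed graph $\Gamma=(G,\sigma)$ is a graph $G=(V,E)$ with $\sigma:E\to\{+1,-1\}$; it is balanced if every cycle has positive sign (product of the signs of its edges). A walk is a sequence $y_1,\dots,y_m$ ($m\ge2$) with $y_j\sim y_{j+1}$. For $f:V\to\mathbb R$, $\Omega=\{x:f(x)\ne0\}$. An S-walk of $f$ is a walk with $f(y_j)\sigma_{y_jy_{j+1}}f(y_{j+1})>0$ for all $j$. A W-walk of $f$ is a walk such that for any two consecutive nonzeros $y_i,y_j$ ($i<j$, $f(y_l)=0$ for $i<l<j$) one has $f(y_i)\sigma_{y_iy_{i+1}}\cdots\sigma_{y_{j-1}y_j}f(y_j)>0$. On $\Omega$, $xR_Sy$ (resp. $xR_Wy$) iff $x=y$ or an S-walk (resp. W-walk) connects them. Strong nodal domains of $f$ on $\Gamma$: induced subgraphs on $R_S$-classes; weak nodal domains: for each $R_W$-class $W_i$, the induced subgraph on $W_i\cup\{x:\text{a W-walk joins } x \text{ to a vertex of } W_i\}$. Unsigned sense (for a graph $G$ and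 $g:V\to\mathbb R$): a positive (negative) strong nodal domain is a maximal connected induced subgraph on vertices with $g>0$ ($g<0$); a positive (negative) weak nodal domain is a maximal connected induced subgraph on vertices with $g\ge0$ ($g\le0$) containing at least one vertex where $g\ne0$. *)

(* Defs.v *)
From mathcomp Require Import all_boot all_order all_algebra.
Set Implicit Arguments. Unset Strict Implicit. Unset Printing Implicit Defensive.
Import Order.TTheory GRing.Theory Num.Theory.
Local Open Scope ring_scope.

(* A finite simple graph is a symmetric irreflexive relation [adj] on a finType
   [T]; a signing is [sigma : T -> T -> R], relevant only on edges (where it is
   symmetric and takes values +1/-1, hypotheses of the theorem).  An induced
   subgraph is identified with its vertex set [S : {set T}]. *)

Section Nodal.
Variables (R : realFieldType) (T : finType) (adj : rel T) (sigma : T -> T -> R).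

Definition cycle_sign (c : seq T) : R :=
  \prod_(e <- zip c (rot 1 c)) sigma e.1 e.2.

Definition balanced : Prop :=
  forall (x : T) (p : seq T), uniq (x :: p) -> (2 <= size p)%N ->
    cycle adj (x :: p) -> cycle_sign (x :: p) = 1.

Variable f : T -> R.

Definition S_walk (x : T) (p : seq T) : Prop :=
  p != [::] /\ path (fun a b => adj a b && (0 < f a * sigma a b * f b)) x p.

Definition W_walk (x : T) (p : seq T) : Prop :=
  let w := x :: p in
  [/\ p != [::], path adj x p &
  forall i j, (i < j < size w)%N ->
    f (nth x w i) != 0 -> f (nth x w j) != 0 ->
    (forall l, (i < l < j)%N -> f (nth x w l) = 0) ->
    0 < f (nth x w i) * (\prod_(i <= l < j) sigma (nth x w l) (nth x w l.+1))
          * f (nth x w j)].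

Definition RS (x y : T) : Prop :=
  [/\ f x != 0, f y != 0 & (x = y \/ exists p, S_walk x p /\ last x p = y)].

Definition RW (x y : T) : Prop :=
  [/\ f x != 0, f y != 0 & (x = y \/ exists p, W_walk x p /\ last x p = y)].

Definition strong_nodal_domain (S : {set T}) : Prop :=
  exists x, f x != 0 /\ forall y, y \in S <-> RS x y.

Definition weak_nodal_domain (S : {set T}) : Prop :=
  exists x, f x != 0 /\ forall y, y \in S <->
    (RW x y \/ exists p, W_walk y p /\ RW x (last y p)).

End Nodal.

Section Unsigned.
Variables (R : realFieldType) (T : finType) (adj : rel T).

Definition induced_connected (S : {set T}) : Prop :=
  S != set0 /\ forall x y, x \in S -> y \in S ->
    connect [rel a b | [&& adj a b, a \in S & b \in S]] x y.

Definition maximal_connected_in (P : pred T) (S : {set T}) : Prop :=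
  [/\ {subset S <= P}, induced_connected S &
      forall S' : {set T}, S \subset S' -> {subset S' <= P} ->
        induced_connected S' -> S' = S].

Variable g : T -> R.

Definition pos_strong_domain S := maximal_connected_in (fun x => 0 < g x) S.
Definition neg_strong_domain S := maximal_connected_in (fun x => g x < 0) S.
Definition pos_weak_domain S :=
  maximal_connected_in (fun x => 0 <= g x) S /\ exists x, x \in S /\ g x != 0.
Definition neg_weak_domain S :=
  maximal_connected_in (fun x => g x <= 0) S /\ exists x, x \in S /\ g x != 0.

Definition unsigned_strong_domain S := pos_strong_domain S \/ neg_strong_domain S.
Definition unsigned_weak_domain S := pos_weak_domain S \/ neg_weak_domain S.

End Unsigned.

(* Main.v *)
Require Import Defs.
From mathcomp Require Import all_boot all_order all_algebra.
From mathcomp Require Import ring lra.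
Import Order.TTheory GRing.Theory Num.Theory.
Set Implicit Arguments. Unset Strict Implicit. Unset Printing Implicit Defensive.
Local Open Scope ring_scope.

Definition eP (T : finType) (adj : rel T) (P : pred T) : rel T :=
  [rel a b | [&& adj a b, P a & P b]].

Lemma path_eP_all (T : finType) (adj : rel T) (P : pred T) x p :
  path (eP adj P) x p -> all P p.
Proof. by elim: p x => //= a p IH x /andP[/and3P[_ _ ->] /IH]. Qed.

Lemma connect_eP_P (T : finType) (adj : rel T) (P : pred T) x y :
  P x -> connect (eP adj P) x y -> P y.
Proof.
move=> Px /connectP[p pth ->].
have := path_eP_all pth.
have : last x p \in x :: p by exact: mem_last.
rewrite inE => /orP[/eqP -> //|yp] /allP; exact.
Qed.

Lemma eP_sym (T : finType) (adj : rel T) (P : pred T) :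
  symmetric adj -> connect_sym (eP adj P).
Proof.
move=> sa; apply: sym_connect_sym => a b /=.
rewrite /eP /=. rewrite (sa b a). by case: (adj a b); case: (P a); case: (P b).
Qed.

Lemma maxL1 (T : finType) (adj : rel T) (P : pred T) x :
  symmetric adj -> P x ->
  maximal_connected_in adj P [set y | connect (eP adj P) x y].
Proof.
move=> sa Px; set C := [set y | _].
have CP : {subset C <= P} by move=> y; rewrite inE; exact: connect_eP_P.
split => //.
- split; first by apply/set0Pn; exists x; rewrite inE connect0.
  move=> y z; rewrite !inE => cy cz.
  have cyz : connect (eP adj P) y z.
    by apply: connect_trans cz; rewrite (eP_sym _ sa).
  move: cy; case/connectP: cyz => p pth -> {z cz}.
  elim: p y pth => [|a p IH] y /=; first by rewrite connect0.
  move=> /andP[e pth] cy.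
  have ca : connect (eP adj P) x a by apply: connect_trans cy (connect1 e).
  apply: connect_trans (IH a pth ca); apply: connect1.
  by move: e => /= /and3P[-> _ _]; rewrite /= !inE cy ca.
- move=> S' sub S'P [_ conS'].
  have xS' : x \in S' by apply: (subsetP sub); rewrite inE connect0.
  apply/setP => y; apply/idP/idP; last by move/(subsetP sub).
  move=> yS'; rewrite inE.
  apply: (connect_sub _ (conS' x y xS' yS')) => a b /= /and3P[e aS bS].
  by apply: connect1; rewrite /eP /= e; move: (S'P a aS) (S'P b bS); rewrite /in_mem /= => -> ->.
Qed.

Lemma maxL2 (T : finType) (adj : rel T) (P : pred T) S x :
  symmetric adj -> maximal_connected_in adj P S -> x \in S ->
  S = [set y | connect (eP adj P) x y].
Proof.
move=> sa [SP [_ conS] maxS] xS.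
have [CP IC _] := maxL1 (P:=P) sa (SP x xS).
symmetry; apply: maxS => //.
apply/subsetP => y yS; rewrite inE.
apply: (connect_sub _ (conS x y xS yS)) => a b /= /and3P[e aS bS].
by apply: connect1; rewrite /eP /= e; move: (SP a aS) (SP b bS); rewrite /in_mem /= => -> ->.
Qed.
Lemma pp_trans (R : realFieldType) (a b c : R) : 0 < a*b -> 0 < b*c -> 0 < a*c.
Proof.
case: (ltgtP b 0) => hb.
- by rewrite (nmulr_lgt0 a hb) (nmulr_rgt0 c hb) => ha hc; rewrite (nmulr_rgt0 c ha).
- by rewrite (pmulr_lgt0 a hb) (pmulr_rgt0 c hb) => ha hc; rewrite (pmulr_rgt0 c ha).
- by rewrite hb mulr0 ltxx.
Qed.
Lemma pn_trans (R : realFieldType) (a b c : R) : 0 < a*b -> 0 <= b*c -> 0 <= a*c.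
Proof.
case: (ltgtP b 0) => hb.
- by rewrite (nmulr_lgt0 a hb) (nmulr_rge0 c hb) => ha hc; rewrite (nmulr_rge0 c ha).
- by rewrite (pmulr_lgt0 a hb) (pmulr_rge0 c hb) => ha hc; rewrite (pmulr_rge0 c ha).
- by rewrite hb mulr0 ltxx.
Qed.
Lemma nn_trans (R : realFieldType) (a b c : R) : a != 0 -> 0 <= a*b -> 0 <= a*c -> 0 <= b*c.
Proof.
case: (ltgtP a 0) => ha // _.
- rewrite (nmulr_rge0 b ha) (nmulr_rge0 c ha) => hb hc; by rewrite mulr_le0.
- rewrite (pmulr_rge0 b ha) (pmulr_rge0 c ha) => hb hc; by rewrite mulr_ge0.
Qed.

Lemma sigma_tau (R : realFieldType) (T : finType) (adj : rel T)
    (sigma : T -> T -> R) (tau : T -> R)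
    (tau_pm : forall x, tau x = 1 \/ tau x = -1)
    (tau_sw : forall x y, adj x y -> tau x * sigma x y * tau y = 1) a b :
  adj a b -> sigma a b = tau a * tau b.
Proof.
move/tau_sw; case: (tau_pm a) => ->; case: (tau_pm b) => -> H; lra.
Qed.

Lemma tau_sq (R : realFieldType) (T : finType) (tau : T -> R)
    (tau_pm : forall x, tau x = 1 \/ tau x = -1) a : tau a * tau a = 1.
Proof. by case: (tau_pm a) => ->; lra. Qed.

Lemma gnz (R : realFieldType) (T : finType) (f tau : T -> R)
    (tau_pm : forall x, tau x = 1 \/ tau x = -1) a :
  (tau a * f a != 0) = (f a != 0).
Proof.
rewrite mulf_eq0 negb_or; case: (tau_pm a) => ->; rewrite ?oppr_eq0 oner_eq0 //.
Qed.

Lemma S_walk_g (R : realFieldType) (T : finType) (adj : rel T)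
    (sigma : T -> T -> R) (f tau : T -> R)
    (tau_pm : forall x, tau x = 1 \/ tau x = -1)
    (tau_sw : forall x y, adj x y -> tau x * sigma x y * tau y = 1) x p :
  S_walk adj sigma f x p <->
  p != [::] /\ path (fun a b => adj a b && (0 < (tau a * f a) * (tau b * f b))) x p.
Proof.
rewrite /S_walk (@eq_path _ _ (fun a b => adj a b && (0 < (tau a * f a) * (tau b * f b)))) //.
move=> a b; case ab: (adj a b) => //=.
rewrite (sigma_tau tau_pm tau_sw ab); congr (0 < _); ring.
Qed.

Lemma prod_tel (R : realFieldType) (T : finType) (adj : rel T)
    (sigma : T -> T -> R) (tau : T -> R)
    (tau_pm : forall x, tau x = 1 \/ tau x = -1)
    (tau_sw : forall x y, adj x y -> tau x * sigma x y * tau y = 1) x p i j :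
  path adj x p -> (i <= j < size (x :: p))%N ->
  \prod_(i <= l < j) sigma (nth x (x :: p) l) (nth x (x :: p) l.+1)
   = tau (nth x (x :: p) i) * tau (nth x (x :: p) j).
Proof.
move=> /(pathP x) pth; elim: j => [|j IH] /andP[ij js].
  by rewrite leqn0 in ij; rewrite (eqP ij) big_geq // (tau_sq tau_pm).
case: (ltngtP i j.+1) ij => // [lt _|-> _]; last by rewrite big_geq // (tau_sq tau_pm).
rewrite big_nat_recr //= IH; last by rewrite -ltnS lt /= ltnW.
have := pth j js; rewrite /= => /(sigma_tau tau_pm tau_sw) ->.
by rewrite -[RHS]mulr1 -(tau_sq tau_pm (nth x (x :: p) j)); ring.
Qed.

Lemma W_walk_g (R : realFieldType) (T : finType) (adj : rel T)
    (sigma : T -> T -> R) (f tau : T -> R)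
    (tau_pm : forall x, tau x = 1 \/ tau x = -1)
    (tau_sw : forall x y, adj x y -> tau x * sigma x y * tau y = 1) x p :
  W_walk adj sigma f x p <->
  [/\ p != [::], path adj x p &
      {in x :: p &, forall u v, 0 <= (tau u * f u) * (tau v * f v)}].
Proof.
rewrite /W_walk; set w := x :: p.
pose G n := tau (nth x w n) * f (nth x w n).
have fG n : (f (nth x w n) != 0) = (G n != 0) by rewrite /G (gnz _ tau_pm).
have key : path adj x p -> forall i j, (i < j < size w)%N ->
   f (nth x w i) * (\prod_(i <= l < j) sigma (nth x w l) (nth x w l.+1))
          * f (nth x w j) = G i * G j.
  move=> pth i j /andP[ij js].
  have -> := prod_tel tau_pm tau_sw (i:=i) (j:=j) pth; last by rewrite (ltnW ij).
  rewrite /G /w; ring.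
split.
- case=> pn pth H; split => //.
  have H' : forall i j, (i < j < size w)%N -> G i != 0 -> G j != 0 ->
      (forall l, (i < l < j)%N -> G l = 0) -> 0 < G i * G j.
    move=> i j ijs Gi Gj Gl; rewrite -key //; apply: H => //; rewrite ?fG //.
    by move=> l /Gl Gl0; apply/eqP; move: (fG l); rewrite Gl0 eqxx /= => /negbFE.
  have cl : forall n a b, (b - a <= n)%N -> (a < b < size w)%N -> G a != 0 -> G b != 0 ->
      0 < G a * G b.
    elim=> [|n IH] a b.
      by rewrite leqn0 subn_eq0 => ba /andP[ab _]; move: (leq_trans ab ba); rewrite ltnn.
    move=> ban /andP[ab bs] Ga Gb.
    case: (boolP [exists l : 'I_b, (a < l)%N && (G l != 0)]).
    + case/existsP => -[l lb] /= /andP[al Gl].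
      apply: (@pp_trans _ _ (G l)).
      * apply: IH => //; last by rewrite al (ltn_trans lb bs).
        by rewrite -ltnS (leq_trans _ ban) // ltn_sub2r.
      * apply: IH => //; last by rewrite lb bs.
        by rewrite -ltnS (leq_trans _ ban) // ltn_sub2l.
    + move/existsPn => nl; apply: H' => //; first by rewrite ab bs.
      move=> l /andP[al lb]; have := nl (Ordinal lb); rewrite /= al /= => /negPn/eqP //.
  move=> u v uw vw.
  have Gu : tau u * f u = G (index u w) by rewrite /G nth_index.
  have Gv : tau v * f v = G (index v w) by rewrite /G nth_index.
  rewrite Gu Gv.
  have [->|Gu0] := eqVneq (G (index u w)) 0; first by rewrite mul0r.
  have [->|Gv0] := eqVneq (G (index v w)) 0; first by rewrite mulr0.
  case: (ltngtP (index u w) (index v w)) => c.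
  + apply: ltW; apply: (cl _ _ _ (leqnn _)) => //; by rewrite c index_mem.
  + rewrite mulrC; apply: ltW; apply: (cl _ _ _ (leqnn _)) => //; by rewrite c index_mem.
  + by rewrite c -expr2 sqr_ge0.
- case=> pn pth H; split => // i j ijs fi fj _.
  rewrite key //; rewrite lt_def mulf_neq0 -?fG //=.
  case/andP: ijs => ij js.
  by apply: H; apply: mem_nth => //; apply: ltn_trans js.
Qed.

Lemma path_inv (T : finType) (e : rel T) (Q : pred T) (adj : rel T) :
  (forall a b, Q a -> e a b -> adj a b && Q b) ->
  forall z p, Q z -> path e z p -> path (eP adj Q) z p.
Proof.
move=> He z p; elim: p z => //= a p IH z Qz /andP[eza pth].
case/andP: (He _ _ Qz eza) => adj_za Qa.
by rewrite /eP /= adj_za Qz Qa /= IH.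
Qed.

Lemma path_all (T : finType) (Q : pred T) (adj : rel T) z p :
  path adj z p -> all Q (z :: p) -> path (eP adj Q) z p.
Proof.
elim: p z => //= a p IH z /andP[za pth] /and3P[Qz Qa Qp].
by rewrite /eP /= za Qz Qa /= IH //= Qa.
Qed.

Lemma RS_char (R : realFieldType) (T : finType) (adj : rel T)
    (sigma : T -> T -> R) (f tau : T -> R)
    (tau_pm : forall x, tau x = 1 \/ tau x = -1)
    (tau_sw : forall x y, adj x y -> tau x * sigma x y * tau y = 1) x y :
  f x != 0 ->
  (RS adj sigma f x y <->
   connect (eP adj (fun a => 0 < (tau x * f x) * (tau a * f a))) x y).
Proof.
move=> fx; set Q := (fun a : T => _).
have gx : tau x * f x != 0 by rewrite (gnz _ tau_pm).
have Qx : Q x by rewrite /Q lt_def mulf_neq0 //= -expr2 sqr_ge0.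
split.
- case=> _ fy [<-|[p [/(S_walk_g _ tau_pm tau_sw) [pn pth] <-]]]; first exact: connect0.
  apply/connectP; exists p => //; apply: (path_inv _ Qx pth).
  move=> a b Qa /andP[-> gab] /=; exact: pp_trans Qa gab.
- move=> cy; have Qy : Q y := connect_eP_P Qx cy.
  have fy : f y != 0.
    by rewrite -(gnz _ tau_pm); apply: contraTneq Qy; rewrite /Q => ->; rewrite mulr0 ltxx.
  split => //; case/connectP: cy => p pth ->.
  case: p pth => [|a p] pth; [by left | right].
  exists (a :: p); split => //; apply/(S_walk_g _ tau_pm tau_sw); split => //.
  apply: sub_path pth => u v /and3P[-> Qu Qv] /=.
  by apply: (@pp_trans _ _ (tau x * f x)) => //; rewrite mulrC.
Qed.

Lemma RW_char (R : realFieldType) (T : finType) (adj : rel T)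
    (sigma : T -> T -> R) (f tau : T -> R) (adj_sym : symmetric adj)
    (tau_pm : forall x, tau x = 1 \/ tau x = -1)
    (tau_sw : forall x y, adj x y -> tau x * sigma x y * tau y = 1) x y :
  f x != 0 ->
  ((RW adj sigma f x y \/ exists p, W_walk adj sigma f y p /\ RW adj sigma f x (last y p)) <->
   connect (eP adj (fun a => 0 <= (tau x * f x) * (tau a * f a))) x y).
Proof.
move=> fx; set Q := (fun a : T => _).
have gx : tau x * f x != 0 by rewrite (gnz _ tau_pm).
have Qx : Q x by rewrite /Q -expr2 sqr_ge0.
have RWc : forall z, RW adj sigma f x z -> connect (eP adj Q) x z.
  move=> z [_ fz [<-|[p [/(W_walk_g _ tau_pm tau_sw) [pn pth H] <-]]]]; first exact: connect0.
  apply/connectP; exists p => //; apply: path_all pth _.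
  by apply/allP => a ap; apply: H => //; rewrite inE eqxx.
have pw : forall z p, all Q (z :: p) ->
    {in z :: p &, forall u v, 0 <= (tau u * f u) * (tau v * f v)}.
  move=> z p /allP aQ u v uz vz.
  exact: (nn_trans gx (aQ u uz) (aQ v vz)).
have sub_adj : subrel (eP adj Q) adj by move=> a b /and3P[].
split.
- case=> [/RWc // | [p [Wp RWz]]].
  have cz := RWc _ RWz.
  move/(W_walk_g _ tau_pm tau_sw): Wp => [pn pth H].
  case: RWz => _ fz _.
  have gz : tau (last y p) * f (last y p) != 0 by rewrite (gnz _ tau_pm).
  have Qz : 0 < (tau x * f x) * (tau (last y p) * f (last y p)).
    by rewrite lt_def mulf_neq0 //=; exact: (connect_eP_P Qx cz).
  have aQ : all Q (y :: p).
    apply/allP => a ap; rewrite /Q; apply: (pn_trans Qz); apply: H => //.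
    exact: mem_last.
  have cyz : connect (eP adj Q) y (last y p).
    by apply/connectP; exists p => //; apply: path_all.
  by apply: connect_trans cz _; rewrite (eP_sym _ adj_sym).
- move=> cy; have Qy : Q y := connect_eP_P Qx cy.
  case: (eqVneq (tau y * f y) 0) => gy.
  + right; have : connect (eP adj Q) y x by rewrite (eP_sym _ adj_sym).
    case/connectP => p pth xe; exists p; rewrite -xe; split; last by split=> //; left.
    apply/(W_walk_g _ tau_pm tau_sw); split.
    * by apply/eqP => p0; move: xe gx; rewrite p0 /= => ->; rewrite gy eqxx.
    * exact: sub_path sub_adj _ _ pth.
    * by apply: pw; apply/andP; split; [exact: Qy | exact: path_eP_all pth].
  + left; split => //; first by rewrite -(gnz _ tau_pm).
    case/connectP: cy => p pth ->.
    case: p pth => [|a p] pth; [by left | right].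
    exists (a :: p); split => //; apply/(W_walk_g _ tau_pm tau_sw); split => //.
    * exact: sub_path sub_adj _ _ pth.
    * by apply: pw; apply/andP; split; [exact: Qx | exact: path_eP_all pth].
Qed.

Lemma eP_eq (T : finType) (adj : rel T) (P P' : pred T) :
  P =1 P' -> connect (eP adj P) =2 connect (eP adj P').
Proof. by move=> h; apply: eq_connect => a b; rewrite /eP /= !h. Qed.

Lemma comp_eq (T : finType) (adj : rel T) (P P' : pred T) x :
  P =1 P' -> [set y | connect (eP adj P) x y] = [set y | connect (eP adj P') x y].
Proof. by move=> h; apply/setP => y; rewrite !inE (eP_eq _ h). Qed.

Lemma set_char (T : finType) (S : {set T}) (Pr : T -> Prop) (e : rel T) x :
  (forall y, y \in S <-> Pr y) -> (forall y, Pr y <-> connect e x y) ->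
  S = [set y | connect e x y].
Proof.
move=> h1 h2; apply/setP => y; rewrite inE; apply/idP/idP.
- by move/h1/h2.
- by move/h2/h1.
Qed.

Theorem corollary3p3 (R : realFieldType) (T : finType) (adj : rel T)
    (sigma : T -> T -> R) (f tau : T -> R)
    (adj_sym : symmetric adj) (adj_irr : irreflexive adj)
    (sigma_sym : forall x y, adj x y -> sigma x y = sigma y x)
    (sigma_pm : forall x y, adj x y -> sigma x y = 1 \/ sigma x y = -1)
    (bal : balanced adj sigma)
    (f_nz : exists x, f x != 0)
    (tau_pm : forall x, tau x = 1 \/ tau x = -1)
    (tau_sw : forall x y, adj x y -> tau x * sigma x y * tau y = 1) :
  forall S : {set T},
    (strong_nodal_domain adj sigma f S <->
       unsigned_strong_domain adj (fun x => tau x * f x) S) /\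
    (weak_nodal_domain adj sigma f S <->
       unsigned_weak_domain adj (fun x => tau x * f x) S).
Proof.
move=> S.
have sgn : forall x, f x != 0 -> 0 < tau x * f x \/ tau x * f x < 0.
  move=> x fx; rewrite -(gnz _ tau_pm) in fx.
  have [h|h|h] := ltgtP (tau x * f x) 0; [by right|by left|by rewrite h eqxx in fx].
have memS : forall (P : pred T) S, induced_connected adj S -> {subset S <= P} ->
    exists x, x \in S /\ P x.
  move=> P S' [/set0Pn[x xS] _] SP; exists x; split => //; exact: SP.
split.
- split.
  + case=> x [fx HS].
    have Sq := set_char HS (fun y => RS_char (x:=x) tau_pm tau_sw y fx).
    case: (sgn x fx) => gx; [left|right]; rewrite Sq.
    * rewrite /pos_strong_domain.
      rewrite (@comp_eq _ _ _ (fun a => 0 < tau a * f a)); last first.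
        by move=> a; rewrite /= pmulr_rgt0.
      exact: maxL1.
    * rewrite /neg_strong_domain.
      rewrite (@comp_eq _ _ _ (fun a => tau a * f a < 0)); last first.
        by move=> a; rewrite /= nmulr_rgt0.
      exact: maxL1.
  + case=> H; have [SP IC _] := H; have [x [xS gx]] := memS _ S IC SP.
    * have fx : f x != 0 by rewrite -(gnz _ tau_pm) lt0r_neq0.
      exists x; split => // y; apply: iff_sym.
      apply: iff_trans (RS_char (x:=x) tau_pm tau_sw y fx) _.
      rewrite (maxL2 adj_sym H xS) inE (eP_eq _ (P' := fun a => 0 < tau a * f a)) //.
      by move=> a; rewrite /= pmulr_rgt0.
    * have fx : f x != 0 by rewrite -(gnz _ tau_pm) ltr0_neq0.
      exists x; split => // y; apply: iff_sym.
      apply: iff_trans (RS_char (x:=x) tau_pm tau_sw y fx) _.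
      rewrite (maxL2 adj_sym H xS) inE (eP_eq _ (P' := fun a => tau a * f a < 0)) //.
      by move=> a; rewrite /= nmulr_rgt0.
- split.
  + case=> x [fx HS].
    have Sq := set_char HS (fun y => RW_char (x:=x) adj_sym tau_pm tau_sw y fx).
    have xS : x \in S by rewrite Sq inE connect0.
    have gx0 : tau x * f x != 0 by rewrite (gnz _ tau_pm).
    case: (sgn x fx) => gx; [left|right]; (split; last by exists x); rewrite Sq.
    * rewrite (@comp_eq _ _ _ (fun a => 0 <= tau a * f a)); last first.
        by move=> a; rewrite /= pmulr_rge0.
      by apply: maxL1; rewrite //= ltW.
    * rewrite (@comp_eq _ _ _ (fun a => tau a * f a <= 0)); last first.
        by move=> a; rewrite /= nmulr_rge0.
      by apply: maxL1; rewrite //= ltW.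
  + case=> -[H [x [xS gx0]]]; have [SP IC _] := H;
    have fx : f x != 0 by rewrite -(gnz _ tau_pm).
    * have gx : 0 < tau x * f x by rewrite lt_def; apply/andP; split; [exact: gx0|exact: SP].
      exists x; split => // y; apply: iff_sym.
      apply: iff_trans (RW_char (x:=x) adj_sym tau_pm tau_sw y fx) _.
      rewrite (maxL2 adj_sym H xS) inE (eP_eq _ (P' := fun a => 0 <= tau a * f a)) //.
      by move=> a; rewrite /= pmulr_rge0.
    * have gx : tau x * f x < 0 by rewrite lt_def eq_sym; apply/andP; split; [exact: gx0|exact: SP].
      exists x; split => // y; apply: iff_sym.
      apply: iff_trans (RW_char (x:=x) adj_sym tau_pm tau_sw y fx) _.
      rewrite (maxL2 adj_sym H xS) inE (eP_eq _ (P' := fun a => tau a * f a <= 0)) //.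
      by move=> a; rewrite /= nmulr_rge0.
Qed.
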